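(* Let $k\le l$ be positive integers with $\gcd(k,l)=1$, let $n\ge1$, $m\ge 0$ be integers, write $m=qn+r$ with integers $q\ge 0$, $0\le r<n$, and let $A=(a_{ij})\in\mathcal D^{k,l}(m,n)$. Let $I$ be a set of rows and $J$ a set of columns of $A$ such that $a_{ij}\le q$ for all $i\in I$, $j\in J$, and such that $|I|+|J|$ is as large as possible among all such pairs. Put $t_1=nk-|I|$ and $t_2=nl-|J|$. Then $$qt_1t_2+r(t_1l+t_2k)\ge klnr.$$
   Context: $\mathcal D^{k,l}(m,n)$ denotes the set of all $nk\times nl$ matrices with nonnegative integer entries all of whose row sums equal $ml$ and all of whose column sums equal $mk$. *)

(* Defs.v *)
From mathcomp Require Import all_boot all_algebra.
Unset Printing Implicit Defensive.

Definition in_D (k l m n : nat) (A : 'M[nat]_(n * k, n * l)) : Prop :=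
  (forall i : 'I_(n * k), \sum_(j < n * l) A i j = m * l) /\
  (forall j : 'I_(n * l), \sum_(i < n * k) A i j = m * k).

Definition small_block (a b : nat) (A : 'M[nat]_(a, b)) (q : nat)
  (I : {set 'I_a}) (J : {set 'I_b}) : Prop :=
  forall i j, i \in I -> j \in J -> A i j <= q.

(* Main.v *)
Require Import Defs.
From mathcomp Require Import all_boot all_algebra.
From mathcomp Require Import zify ring.
Import GRing.Theory.

Theorem lemma2p3 (k l n m : nat) (A : 'M[nat]_(n * k, n * l))
  (I : {set 'I_(n * k)}) (J : {set 'I_(n * l)}) :
  0 < k -> k <= l -> gcdn k l = 1 -> 0 < n ->
  in_D k l m n A ->
  small_block _ _ A (m %/ n) I J ->
  (forall (I' : {set 'I_(n * k)}) (J' : {set 'I_(n * l)}),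
      small_block _ _ A (m %/ n) I' J' -> #|I'| + #|J'| <= #|I| + #|J|) ->
  let q := m %/ n in let r := m %% n in
  let t1 := n * k - #|I| in let t2 := n * l - #|J| in
  k * l * n * r <= q * t1 * t2 + r * (t1 * l + t2 * k).
Proof.
move=> _ _ _ _ [Hr Hc] Hs _; cbv zeta.
set q := m %/ n; set r := m %% n; set t1 := n * k - #|I|; set t2 := n * l - #|J|.
set T := \sum_(i < n * k) \sum_(j < n * l) A i j.
have HT : T = n * k * (m * l).
  rewrite /T (eq_bigr (fun _ => m * l)); last by move=> i _; exact: Hr.
  by rewrite sum_nat_const card_ord.
have HI : \sum_(i in I) \sum_(j < n * l) A i j = #|I| * (m * l).
  rewrite (eq_bigr (fun _ => m * l)); last by move=> i _; exact: Hr.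
  by rewrite sum_nat_const.
have HJ : \sum_(j in J) \sum_(i < n * k) A i j = #|J| * (m * k).
  rewrite (eq_bigr (fun _ => m * k)); last by move=> i _; exact: Hc.
  by rewrite sum_nat_const.
set sIJ := \sum_(i in I) \sum_(j in J) A i j.
set sCJ := \sum_(i in ~: I) \sum_(j in J) A i j.
have HJ2 : #|J| * (m * k) = sIJ + sCJ.
  rewrite -HJ exchange_big /= (bigID (fun i => i \in I)) /=.
  congr (_ + _); apply: eq_bigl => i; by rewrite ?in_setC.
have HT2 : T = #|I| * (m * l) + \sum_(i in ~: I) \sum_(j < n * l) A i j.
  rewrite -HI /T (bigID (fun i => i \in I)) /=.
  congr (_ + _); apply: eq_bigl => i; by rewrite ?in_setC.
have Hle : sCJ <= \sum_(i in ~: I) \sum_(j < n * l) A i j.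
  apply: leq_sum => i _.
  rewrite [X in _ <= X](bigID (fun j => j \in J)) /=.
  exact: leq_addr.
have HsIJ : sIJ <= #|I| * (#|J| * q).
  rewrite -sum_nat_const; apply: leq_sum => i Hi.
  rewrite -sum_nat_const; apply: leq_sum => j Hj; exact: Hs.
have Ha : #|I| <= n * k by rewrite -[X in _ <= X]card_ord max_card.
have Hb : #|J| <= n * l by rewrite -[X in _ <= X]card_ord max_card.
have Hm : m = q * n + r by rewrite /q /r -divn_eq.
have Key : #|I| * (m * l) + #|J| * (m * k) <= n * k * (m * l) + #|I| * (#|J| * q) by lia.
clearbody T sIJ sCJ.
have E1 : n * k = #|I| + t1 by rewrite /t1; lia.
have E2 : n * l = #|J| + t2 by rewrite /t2; lia.
clearbody t1 t2 q r.
move: #|I| #|J| E1 E2 Key Hm => a b E1 E2 Key Hm.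
subst m.
have Ea : Posz a = (Posz (n * k) - Posz t1)%R by rewrite E1 PoszD addrK.
have Eb : Posz b = (Posz (n * l) - Posz t2)%R by rewrite E2 PoszD addrK.
have Id : (k * l * n * r + (n * k * ((q * n + r) * l) + a * (b * q))
   = q * t1 * t2 + r * (t1 * l + t2 * k) + (a * ((q * n + r) * l) + b * ((q * n + r) * k)))%N.
  apply/eqP; rewrite -eqz_nat; apply/eqP.
  rewrite !(PoszD, PoszM) Ea Eb !PoszM; ring.
lia.
Qed.
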